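(* There is an $\omega$-language that is PPBA-recognizable but not RPBA-recognizable.
   Context: A Parikh automaton of dimension $d$ is $\mathcal{A}=(Q,\Sigma,q_0,\Delta,F,C)$ with finite $Q$, $q_0\in Q$, $F\subseteq Q$, finite $\Delta\subseteq Q\times\Sigma\times\mathbb{N}^d\times Q$ and semi-linear $C\subseteq\mathbb{N}^d$ (a finite union of sets $\{b_0+\sum_{j=1}^\ell b_jz_j\mid z_j\in\mathbb{N}\}$, $b_j\in\mathbb{N}^d$). A run on an infinite word $\alpha$ is $r_1r_2\cdots$ with $r_i=(p_{i-1},\alpha_i,\mathbf{v}_i,p_i)\in\Delta$, $p_0=q_0$, and $\rho(r_1\cdots r_i)=\sum_{k\le i}\mathbf{v}_k$. For an RPBA (reachability Parikh–Büchi automaton) the run is accepting if there is $i\ge1$ with $p_i\in F$ and $\rho(r_1\cdots r_i)\in C$, and there are infinitely many $j$ with $p_j\in F$. For a PPBA (prefix Parikh–Büchi automaton) the run is accepting if there are infinitely many $i\ge1$ with $p_i\in F$ and $\rho(r_1\cdots r_i)\in C$. An $\omega$-language is X-recognizable if it equals the set of infinite words with an accepting run of some automaton of type X. *)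

(* Defs.v *)
From mathcomp Require Import all_boot.
Set Implicit Arguments. Unset Strict Implicit. Unset Printing Implicit Defensive.

Definition vec (d : nat) := {ffun 'I_d -> nat}.

Definition vadd d (u v : vec d) : vec d := [ffun i => u i + v i].
Definition vscale d (z : nat) (v : vec d) : vec d := [ffun i => z * v i].

(* A linear set {b0 + sum_j z_j b_j | z_j in N}, given by base b0 and periods. *)
Fixpoint in_linear d (b0 : vec d) (ps : seq (vec d)) (v : vec d) : Prop :=
  match ps with
  | [::] => v = b0
  | p :: ps' => exists z : nat, in_linear (vadd b0 (vscale z p)) ps' v
  end.

Definition semilinear d := seq (vec d * seq (vec d)).

Definition in_semilinear d (C : semilinear d) (v : vec d) : Prop :=
  exists2 l, l \in C & in_linear l.1 l.2 v.

Record PA (Sigma : finType) := mkPA {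
  pa_Q : finType;
  pa_dim : nat;
  pa_q0 : pa_Q;
  pa_delta : seq (pa_Q * Sigma * vec pa_dim * pa_Q);
  pa_F : {set pa_Q};
  pa_C : semilinear pa_dim
}.

Section Runs.
Variables (Sigma : finType) (A : PA Sigma).

Definition trans := (pa_Q A * Sigma * vec (pa_dim A) * pa_Q A)%type.
Definition tsrc (t : trans) : pa_Q A := t.1.1.1.
Definition tlet (t : trans) : Sigma := t.1.1.2.
Definition tvec (t : trans) : vec (pa_dim A) := t.1.2.
Definition ttgt (t : trans) : pa_Q A := t.2.

(* r k is the transition r_{k+1} = (p_k, alpha_{k+1}, v_{k+1}, p_{k+1});
   words are indexed from 0: alpha k is the (k+1)-th letter. *)
Definition is_run (alpha : nat -> Sigma) (r : nat -> trans) : Prop :=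
  tsrc (r 0) = pa_q0 A /\
  (forall k, r k \in pa_delta A) /\
  (forall k, tlet (r k) = alpha k) /\
  (forall k, ttgt (r k) = tsrc (r k.+1)).

Definition rho (r : nat -> trans) (i : nat) : vec (pa_dim A) :=
  [ffun j => \sum_(k < i) tvec (r k) j].

(* state p_i for i >= 1 is ttgt (r (i-1)) *)
Definition RPBA_accepting (r : nat -> trans) : Prop :=
  (exists k, ttgt (r k) \in pa_F A /\ in_semilinear (pa_C A) (rho r k.+1)) /\
  (forall N, exists2 k, N <= k & ttgt (r k) \in pa_F A).

Definition PPBA_accepting (r : nat -> trans) : Prop :=
  forall N, exists2 k, N <= k &
    ttgt (r k) \in pa_F A /\ in_semilinear (pa_C A) (rho r k.+1).

Definition RPBA_accepts (alpha : nat -> Sigma) : Prop :=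
  exists r, is_run alpha r /\ RPBA_accepting r.
Definition PPBA_accepts (alpha : nat -> Sigma) : Prop :=
  exists r, is_run alpha r /\ PPBA_accepting r.
End Runs.

Definition RPBA_recognizable (Sigma : finType) (L : (nat -> Sigma) -> Prop) :=
  exists A : PA Sigma, forall alpha, L alpha <-> RPBA_accepts A alpha.
Definition PPBA_recognizable (Sigma : finType) (L : (nat -> Sigma) -> Prop) :=
  exists A : PA Sigma, forall alpha, L alpha <-> PPBA_accepts A alpha.

(* Main.v *)
Require Import Defs.
From mathcomp Require Import all_boot.
From mathcomp Require Import zify.
Set Implicit Arguments. Unset Strict Implicit. Unset Printing Implicit Defensive.

Fixpoint cnt (u : nat -> bool) n := if n is n'.+1 then cnt u n' + u n' else 0.

Lemma cnt_ext u v n : (forall i, i < n -> u i = v i) -> cnt u n = cnt v n.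
Proof. elim: n => //= n IH H; rewrite IH ?H // => i Hi; apply: H; lia. Qed.

Lemma cnt_add u m n : cnt u (m + n) = cnt u m + cnt (fun i => u (m + i)) n.
Proof. elim: n => [|n IH]; first by rewrite /= !addn0. by rewrite addnS /= IH addnA. Qed.

Lemma cnt_le u n : cnt u n <= n.
Proof. elim: n => //= n IH; case: (u n) => /=; lia. Qed.

Lemma cnt_neg u n : cnt u n + cnt (fun i => ~~ u i) n = n.
Proof. elim: n => //= n IH; case: (u n) => /=; lia. Qed.

Lemma cnt_true (u : nat -> bool) n : (forall i, i < n -> u i) -> cnt u n = n.
Proof. elim: n => //= n IH H; rewrite IH ?H //= ?addn1 // => i Hi; apply: H; lia. Qed.

Lemma cnt_false (u : nat -> bool) n : (forall i, i < n -> ~~ u i) -> cnt u n = 0.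
Proof. elim: n => //= n IH H; rewrite IH; last by move=> i Hi; apply: H; lia.
by move: (H n (ltnSn n)); case: (u n). Qed.

Lemma cnt_per u L q y : (forall z, u (z + L) = u z) ->
  cnt u (q * L + y) = q * cnt u L + cnt u y.
Proof.
move=> Hp; elim: q => [|q IH]; first by rewrite !mul0n.
rewrite mulSn -addnA cnt_add (@cnt_ext _ u (q * L + y)); last by move=> i _; rewrite addnC Hp.
rewrite IH; lia.
Qed.

Lemma modS y L : 0 < L -> y.+1 %% L = if (y %% L).+1 < L then (y %% L).+1 else 0.
Proof. move=> HL. rewrite {1}(divn_eq y L) -addnS modnMDl.
case: ifP => H; first by rewrite modn_small.
have : (y %% L).+1 = L by have := ltn_pmod y HL; lia.
by move ->; rewrite modnn. Qed.

Lemma pigeon (T : finType) (f : nat -> T) : exists i j, i < j <= #|T| /\ f i = f j.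
Proof.
have: ~~ injectiveb (fun i : 'I_#|T|.+1 => f i).
  apply/negP => /injectiveP inj; have := leq_card _ inj; by rewrite card_ord ltnn.
case/injectivePn => x [y] neq eq.
case: (ltngtP x y) => Hxy.
- exists x, y; split => //; rewrite Hxy /=; by have := ltn_ord y.
- exists y, x; split => //; rewrite Hxy /=; by have := ltn_ord x.
- by move: neq; rewrite (val_inj Hxy) eqxx.
Qed.

Definition Lb (al : nat -> bool) : Prop :=
  forall M, exists2 n, M <= n & cnt al n = cnt (fun i => ~~ al i) n.

Definition e0 : vec 2 := [ffun i : 'I_2 => nat_of_bool (val i == 0)].
Definition e1 : vec 2 := [ffun i : 'I_2 => nat_of_bool (val i == 1)].
Definition A0 : PA bool :=
  @mkPA bool unit 2 tt [:: (tt, true, e0, tt); (tt, false, e1, tt)] setT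
    [:: ([ffun => 0], [:: [ffun => 1]])].

Lemma A0_vec (al : nat -> bool) (r : nat -> trans A0) n : is_run al r -> tvec (r n) = if al n then e0 else e1.
Proof.
case=> _ [Hd [Hl _]]; move: (Hd n) (Hl n); case: (r n) => [[[u l] v] w].
rewrite /tlet /tvec /= !inE => /orP[|/orP[]] //= /eqP E.
  have := congr1 (fun x => x.1.1.2) E; have := congr1 (fun x => x.1.2) E => /= -> ->;
  by move <-.
have := congr1 (fun x => x.1.2) E; have := congr1 (fun x => x.2) E => /= -> ->;
  by move <-.
Qed.

Lemma A0_rho (al : nat -> bool) (r : nat -> trans A0) n : is_run al r ->
  rho r n = [ffun j : 'I_2 => if val j == 0 then cnt al n else cnt (fun i => ~~ al i) n].
Proof.
move=> Hr; apply/ffunP => j; rewrite !ffunE.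
elim: n => [|n IH]; first by rewrite big_ord0 /=; case: ifP.
rewrite big_ord_recr /= IH (A0_vec _ Hr).
case: j IH => [[|[|]]] //= Hj _; case: (al n); rewrite /= ?ffunE //=.
Qed.

Lemma A0_ok : PPBA_recognizable Lb.
Proof.
exists A0 => al; split.
- move=> HL.
  pose r (n : nat) : trans A0 := (tt, al n, if al n then e0 else e1, tt).
  have Hr : is_run al r.
    split => //; split; last by split.
    move=> k; rewrite /r; case: (al k); by rewrite !inE eqxx ?orbT.
  exists r; split => // N.
  case: (HL N.+1) => n Hn Hb.
  exists n.-1; first lia.
  split; first by rewrite inE.
  have -> : n.-1.+1 = n by lia.
  rewrite (A0_rho n Hr).
  exists ([ffun => 0], [:: [ffun => 1]]); first by rewrite inE.
  exists (cnt al n) => /=; apply/ffunP => j; rewrite !ffunE.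
  case: ifP => _; lia.
- case=> r [Hr Hacc] M.
  case: (Hacc M) => k Hk [_ [l]]; rewrite inE => /eqP -> /= [z].
  rewrite (A0_rho _ Hr) => /ffunP Hz.
  exists k.+1; first lia.
  move: (Hz ord0) (Hz (@Ordinal 2 1 isT)); rewrite !ffunE /=. lia.
Qed.
Section Lasso.
Variables (A : PA bool) (al : nat -> bool) (r : nat -> trans A).
Hypothesis Hrun : is_run al r.
Variables (k P a b E w : nat).
Hypotheses (HkP : k < P) (HPa : P <= a) (Hab : a < b) (HbE : b <= E).
Hypothesis Hreach : ttgt (r k) \in pa_F A /\ in_semilinear (pa_C A) (rho r k.+1).
Hypothesis HF : ttgt (r E) \in pa_F A.
Hypothesis Hsab : tsrc (r a) = tsrc (r b).
Hypothesis HsP : tsrc (r P) = tsrc (r E.+1).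
Hypothesis Hw : w = 0 \/ w = b - a.
Hypothesis Hblock : forall i, i < b - a -> al (a + i).

Definition Lp := E.+1 - P + w.
Definition gx x := if x < b - P then P + x else if x < b - P + w then a + (x - (b - P))
  else x + P - w.
Definition hh n := if n < P then n else gx ((n - P) %% Lp).
Definition r' n := r (hh n).
Definition be n := al (hh n).

Lemma Lp_gt0 : 0 < Lp. Proof. rewrite /Lp; lia. Qed.

Lemma src_eq i j : i = j -> tsrc (r i) = tsrc (r j). Proof. by move->. Qed.

Lemma cont n : ttgt (r n) = tsrc (r n.+1).
Proof. by case: Hrun => _ [_ [_ H]]. Qed.

Lemma gx_step x : x < Lp ->
  tsrc (r (gx (if x.+1 < Lp then x.+1 else 0))) = tsrc (r (gx x).+1).
Proof.
move=> Hx; have Hw' := Hw; have HL := Lp_gt0; rewrite /Lp in Hx HL *.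
case: ifP => Hx1; rewrite /gx;
 do 4 (try (case: ifP => ?));
 first [ apply: src_eq; lia
       | (transitivity (tsrc (r a)); [apply: src_eq; lia|]; rewrite Hsab; apply: src_eq; lia)
       | (transitivity (tsrc (r P)); [apply: src_eq; lia|]; rewrite HsP; apply: src_eq; lia)
       | exfalso; lia ].
Qed.

Lemma hh_step n : tsrc (r (hh n.+1)) = tsrc (r (hh n).+1).
Proof.
have HL := Lp_gt0; rewrite /hh.
case: (ltnP n.+1 P) => H1.
  by rewrite ifT //; lia.
case: (ltnP n P) => H2.
  have -> : n.+1 - P = 0 by lia.
  rewrite mod0n /gx ifT; last lia.
  apply: src_eq; lia.
have -> : n.+1 - P = (n - P).+1 by lia.
rewrite modS //; apply: gx_step; exact: ltn_pmod.
Qed.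

Lemma run' : is_run be r'.
Proof.
case: Hrun => H0 [Hd [Hl _]].
split; first by rewrite /r' /hh ifT; [|lia].
split; first by move=> n; apply: Hd.
split; first by move=> n; apply: Hl.
by move=> n; rewrite /r' cont hh_step.
Qed.

Lemma acc' : RPBA_accepting r'.
Proof.
case: Hreach => Hk Hc; split.
  exists k; rewrite /r' /hh ifT; last lia.
  split => //.
  have -> : rho r' k.+1 = rho r k.+1; last by [].
  apply/ffunP => j; rewrite !ffunE; apply: eq_bigr => i _.
  by rewrite /r' /hh ifT //; have := ltn_ord i; lia.
move=> M; exists (P + (M * Lp + Lp.-1)); first by have := Lp_gt0; nia.
rewrite /r' /hh ifF; last lia.
rewrite addnC addnK modnMDl modn_small; last by have := Lp_gt0; lia.
rewrite /gx /Lp ifF; last lia. rewrite ifF; last lia.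
by have -> : (E.+1 - P + w).-1 + P - w = E by lia.
Qed.

Lemma be_per z : be (P + (z + Lp)) = be (P + z).
Proof. by rewrite /be /hh !ifF ?addKn ?modnDr //; lia. Qed.

Lemma aL : cnt (fun z => be (P + z)) Lp =
  cnt (fun x => al (P + x)) (b - P) + w + cnt (fun z => al (b + z)) (E.+1 - b).
Proof.
rewrite (@cnt_ext _ (fun x => al (gx x))); last first.
  move=> i Hi; rewrite /be /hh ifF ?addKn ?modn_small //; lia.
have -> : Lp = b - P + (w + (E.+1 - b)) by rewrite /Lp; lia.
rewrite cnt_add cnt_add -addnA; congr (_ + (_ + _)).
- apply: cnt_ext => i Hi; rewrite /gx ifT //.
- apply: cnt_true => i Hi; rewrite /gx ifF; last lia. rewrite ifT; last lia.
  have -> : b - P + i - (b - P) = i by lia.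
  apply: Hblock; lia.
- apply: cnt_ext => i Hi; rewrite /gx ifF; last lia. rewrite ifF; last lia.
  apply: congr1; lia.
Qed.

Lemma notL : 2 * cnt (fun z => be (P + z)) Lp <> Lp -> ~ Lb be.
Proof.
move=> Hne HL.
have HL0 := Lp_gt0.
case: (HL (P + (P + Lp) * Lp)) => n Hn Hbal.
have Hb2 : 2 * cnt be n = n by have := cnt_neg be n; lia.
pose q := (n - P) %/ Lp; pose y := (n - P) %% Lp.
have Hny : n = P + (q * Lp + y) by rewrite /q /y -divn_eq; lia.
have Hq : P + Lp <= q by rewrite /q leq_divRL //; lia.
have Hy : y < Lp by exact: ltn_pmod.
move: Hb2; rewrite Hny cnt_add (cnt_per _ _ (u := fun z => be (P + z)) be_per).
set X := cnt be P; set aa := cnt (fun z => be (P + z)) Lp; set Y := cnt _ y.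
have HX : X <= P by apply: cnt_le.
have HY : Y <= y by apply: cnt_le.
move: Hne; rewrite -/aa => Hne.
case: (ltngtP (2 * aa) Lp) => Ha //.
- have : q * (2 * aa) + q <= q * Lp by rewrite addnC -mulnS leq_mul2l Ha orbT.
  nia.
- have : q * Lp + q <= q * (2 * aa) by rewrite addnC -mulnS leq_mul2l Ha orbT.
  nia.
Qed.


Lemma lasso_ex : 2 * (cnt (fun x => al (P + x)) (b - P) + w + cnt (fun z => al (b + z)) (E.+1 - b))
  <> E.+1 - P + w -> exists2 bb, RPBA_accepts A bb & ~ Lb bb.
Proof.
move=> H; exists be; first by exists r'; split; [apply: run'|apply: acc'].
by apply: notL; rewrite aL.
Qed.
End Lasso.

Lemma lasso_any (A : PA bool) (al : nat -> bool) (r : nat -> trans A) (Hrun : is_run al r)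
  k P a b E (HkP : k < P) (HPa : P <= a) (Hab : a < b) (HbE : b <= E)
  (Hreach : ttgt (r k) \in pa_F A /\ in_semilinear (pa_C A) (rho r k.+1))
  (HF : ttgt (r E) \in pa_F A) (Hsab : tsrc (r a) = tsrc (r b))
  (HsP : tsrc (r P) = tsrc (r E.+1)) (Hblock : forall i, i < b - a -> al (a + i)) :
  exists2 bb, RPBA_accepts A bb & ~ Lb bb.
Proof.
set K1 := cnt (fun x => al (P + x)) (b - P); set K2 := cnt (fun z => al (b + z)) (E.+1 - b).
case: (eqVneq (2 * (K1 + 0 + K2)) (E.+1 - P + 0)) => H.
- apply: (@lasso_ex A al r Hrun k P a b E (b - a)) => //; [by right | lia].
- apply: (@lasso_ex A al r Hrun k P a b E 0) => //; [by left | by apply/eqP].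
Qed.
Lemma blk N M : cnt (fun n => n %% (N + N) < N) ((N + N) * M) = N * M.
Proof.
elim: M => [|M IH]; first by rewrite !muln0.
rewrite mulnS addnC cnt_add IH.
rewrite (@cnt_ext _ (fun i => i %% (N + N) < N)); last first.
  by move=> i _; rewrite mulnC modnMDl.
rewrite cnt_add cnt_true; last by move=> i Hi; rewrite modn_small //; lia.
rewrite cnt_false; last by move=> i Hi; rewrite modn_small; lia.
lia.
Qed.

Fixpoint iterg (g : nat -> nat) (x0 s t : nat) : nat :=
  if t is t'.+1 then g (iterg g x0 s t' + s) else g x0.

Theorem lemma3 :
  exists (Sigma : finType) (L : (nat -> Sigma) -> Prop),
    PPBA_recognizable L /\ ~ RPBA_recognizable L.
Proof.
exists bool, Lb; split; first exact: A0_ok.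
case=> A HA.
set N := #|pa_Q A|.+1.
pose al0 n := n %% (N + N) < N.
have HL0 : Lb al0.
  move=> M; exists ((N + N) * M); first by rewrite /N; nia.
  have := cnt_neg al0 ((N + N) * M); rewrite blk; lia.
case: ((HA al0).1 HL0) => r [Hr [[k Hk] Hinf]].
have exF x : exists j, (x <= j) && (ttgt (r j) \in pa_F A).
  by case: (Hinf x) => j Hj HF; exists j; rewrite Hj HF.
pose g x := ex_minn (exF x).
have gP x : x <= g x /\ ttgt (r (g x)) \in pa_F A.
  by rewrite /g; case: ex_minnP => j /andP[].
pose e := iterg g k (4 * N).
have eS t : e t + 4 * N <= e t.+1 by exact: (gP _).1.
have eF t : ttgt (r (e t)) \in pa_F A by case: t => [|t]; exact: (gP _).2.
have ek t : k <= e t.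
  elim: t => [|t IH]; first exact: (gP _).1.
  have := eS t; lia.
have emono i n : e i + 4 * N <= e (i + n.+1).
  elim: n => [|n IH]; first by rewrite addn1.
  rewrite !addnS in IH *; have := eS (i + n).+1; lia.
have [i [j [/andP [Hij _] Heq]]] := pigeon (fun t => ttgt (r (e t))).
have Hcont n : ttgt (r n) = tsrc (r n.+1) by case: Hr => _ [_ [_ H]].
set P := (e i).+1; set E := e j.
have HPE : P + 4 * N <= E.+1.
  have := emono i (j - i).-1; have -> : i + (j - i).-1.+1 = j by lia. rewrite /P /E; lia.
pose c := (N + N) * (P %/ (N + N)).+1.
have Hc : P < c <= P + (N + N).
  rewrite /c mulnS {1 3}(divn_eq P (N + N)) mulnC.
  have := ltn_pmod P (isT : 0 < (N + N)).
  lia.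
have [s [t [/andP [Hst HtQ] Hseq]]] := pigeon (fun x => tsrc (r (c + x))).
have HN : N = #|pa_Q A|.+1 by [].
have [bb Hacc HnL] : exists2 bb, RPBA_accepts A bb & ~ Lb bb.
  apply: (@lasso_any A al0 r Hr k P (c + s) (c + t) E).
  - have := ek i; rewrite /P; lia.
  - lia.
  - lia.
  - lia.
  - exact: Hk.
  - exact: eF.
  - exact: Hseq.
  - by rewrite /P /E -!Hcont.
  - move=> y Hy; rewrite /al0 /c -addnA mulnC modnMDl modn_small; lia.
by apply: HnL; apply/(HA bb).2.
Qed.
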